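(* Let $(d(t),\,t\ge0)$ be a nonnegative, locally integrable demand function and fix the initial energy configuration. For a discharge-only policy $\pi$ define $\tau(\pi)=\sup\{\tilde T\ge0:\ \text{the unserved energy of }\pi\text{ over }[0,\tilde T]\text{ equals }0\}$. Then $\tau(\mathrm{GGDDF})\ge\tau(\pi)$ for every discharge-only policy $\pi$; that is, the GGDDF policy maximises the time until the stores are first unable to serve all demand.
   Context: A finite set $\mathcal S$ of energy stores is given. Store $i\in\mathcal S$ has capacity $\overline E_i>0$ and maximum discharge rate $P_i>0$. A (discharge-only) policy is a choice of measurable rate functions $(r_i(t),\,t\ge0)$, $i\in\mathcal S$, with stored energies $E_i(t)=E_i(0)-\int_0^t r_i(u)\,du$, subject to $0\le E_i(t)\le\overline E_i$, $0\le r_i(t)\le P_i$ and $\sum_{i\in\mathcal S}r_i(t)\le d(t)$ for all $t\ge0$, where $(d(t),\,t\ge0)$ is a nonnegative demand function. The unserved energy over $[0,T]$ is $\int_0^T\max\bigl(d(t)-\sum_{i}r_i(t),0\bigr)dt$. GGDDF (greedy greatest-discharge-duration-first) policy: at (almost) every time $t$, the total served rate is $\bar d(t)=\min\bigl(d(t),\sum_{i:E_i(t)>0}P_i\bigr)$, and it is allocated as follows: the nonempty stores are partitioned into groups $G_1,G_2,\dots$ of equal discharge-duration $E_i(t)/P_i$, listed in strictly decreasing order of that duration; letting $m$ be the least index with $\sum_{k\le m}\sum_{i\in G_k}P_i\ge\bar d(t)$, every store in $G_k$ with $k<m$ discharges at rate $P_i$, every store $i\in G_m$ discharges at rate $\lambda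 P_i$ with $\lambda\in(0,1]$ chosen so that $\sum_i r_i(t)=\bar d(t)$, and all other stores have rate $0$ (all rates are $0$ if $\bar d(t)=0$). *)

(* Defs.v *)
From HB Require Import structures.
From mathcomp Require Import all_boot all_order all_algebra.
From mathcomp Require Import all_classical all_reals all_analysis.
Set Implicit Arguments. Unset Strict Implicit. Unset Printing Implicit Defensive.
Import Order.TTheory GRing.Theory Num.Theory.
Import numFieldNormedType.Exports.
Local Open Scope classical_set_scope.
Local Open Scope ring_scope.

Section Storage.
Variables (R : realType) (S : finType).

Local Notation mu := (@lebesgue_measure R).

Definition energy (E0 : S -> R) (r : S -> R -> R) (i : S) (t : R) : R :=
  E0 i - Rintegral mu (`[0%R, t] : set R) (r i).

Definition policy (Ebar P E0 : S -> R) (d : R -> R) (r : S -> R -> R) : Prop :=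
  (forall i : S, measurable_fun (`[0%R, +oo[ : set R) (r i)) /\
  (forall t, 0 <= t ->
     (forall i, 0 <= energy E0 r i t <= Ebar i) /\
     (forall i, 0 <= r i t <= P i) /\
     \sum_(i : S) r i t <= d t).

Definition unserved (d : R -> R) (r : S -> R -> R) (T : R) : \bar R :=
  (\int[mu]_(x in (`[0%R, T] : set R)) (Num.max (d x - \sum_(i : S) r i x) 0)%:E)%E.

Definition tau (d : R -> R) (r : S -> R -> R) : \bar R :=
  ereal_sup (EFin @` [set T | 0 <= T /\ unserved d r T = 0%E]).

(* Groups are the classes of nonempty stores
   with equal duration E_i/P_i; the group G_m is the one of duration delta,
   the groups G_k, k < m, are those of strictly larger duration. *)
Definition ggddf_alloc (P : S -> R) (E : S -> R) (D : R) (rho : S -> R) : Prop :=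
  let dbar := Num.min D (\sum_(i | 0 < E i) P i) in
  let dur i := E i / P i in
  (dbar = 0 /\ forall i, rho i = 0) \/
  (0 < dbar /\
   exists (delta lambda : R),
     (exists j, 0 < E j /\ dur j = delta) /\
     (* m is the least index with cumulative power >= dbar *)
     \sum_(i | (0 < E i) && (delta < dur i)) P i < dbar /\
     dbar <= \sum_(i | (0 < E i) && (delta <= dur i)) P i /\
     0 < lambda <= 1 /\
     (forall i, 0 < E i -> delta < dur i -> rho i = P i) /\
     (forall i, 0 < E i -> dur i = delta -> rho i = lambda * P i) /\
     (forall i, 0 < E i -> dur i < delta -> rho i = 0) /\
     (forall i, ~ (0 < E i) -> rho i = 0) /\
     \sum_(i : S) rho i = dbar).

Definition ggddf (Ebar P E0 : S -> R) (d : R -> R) (r : S -> R -> R) : Prop :=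
  policy Ebar P E0 d r /\
  {ae mu, forall t, 0 <= t ->
     ggddf_alloc P (fun i => energy E0 r i t) (d t) (fun i => r i t)}.

End Storage.

(* Main.v *)
Require Import Defs.
From HB Require Import structures.
From mathcomp Require Import all_boot all_order all_algebra.
From mathcomp Require Import all_classical all_reals all_analysis.
From mathcomp Require Import measurable_realfun lra.
Import Order.TTheory GRing.Theory Num.Theory.
Local Open Scope classical_set_scope.
Local Open Scope ring_scope.

Import numFieldNormedType.Exports.
Set Implicit Arguments. Unset Strict Implicit. Unset Printing Implicit Defensive.

Section H.
Variable R : realType.
Local Notation mu := (@lebesgue_measure R).

Lemma int_bnd (D : set R) (f : R -> R) (M : R) :
  measurable D -> D `<=` (`[0%R, +oo[ : set R) -> (mu D < +oo)%E ->
  measurable_fun (`[0%R, +oo[ : set R) f -> (forall x, 0 <= x -> `|f x| <= M) ->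
  mu.-integrable D (EFin \o f).
Proof.
move=> mD D0 muD mf fM; apply/integrableP; split.
  by apply/measurable_EFinP; apply: measurable_funS mf.
apply: (@le_lt_trans _ _ (\int[mu]_(x in D) (cst M%:E) x)%E).
  apply: ge0_le_integral => //.
  - by apply/measurable_EFinP; apply: measurableT_comp => //;
       apply: measurable_funS mf.
  - move=> x Dx; rewrite lee_fin /=; apply: fM.
    by have := D0 _ Dx; rewrite /= in_itv /= andbT.
rewrite integral_cst //.
have M0 : 0 <= M by apply: le_trans (fM 0 (lexx 0)).
by rewrite lte_mul_pinfty.
Qed.

Lemma mu_itv_fin (a b : R) (c : bool) : (mu [set` Interval (BSide c a) (BRight b)] < +oo)%E.
Proof. by rewrite lebesgue_measure_itv /=; case: ifP => _; rewrite ?ltry. Qed.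

Lemma itv_sub0 (a b : R) (c : bool) : 0 <= a ->
  [set` Interval (BSide c a) (BRight b)] `<=` (`[0%R, +oo[ : set R).
Proof.
move=> a0 x /=; rewrite !in_itv /= andbT => /andP[+ _].
case: c => /= h; [exact: le_trans h| exact: (le_trans a0 (ltW h))].
Qed.

Variables (S : finType) (P E0 : S -> R) (r : S -> R -> R).
Hypothesis hm : forall i, measurable_fun (`[0%R, +oo[ : set R) (r i).
Hypothesis hb : forall t, 0 <= t -> forall i, 0 <= r i t <= P i.

Lemma r_int i a b c : 0 <= a ->
  mu.-integrable [set` Interval (BSide c a) (BRight b)] (EFin \o r i).
Proof.
move=> a0; apply: (@int_bnd _ _ (P i)) => //.
- exact: itv_sub0.
- exact: mu_itv_fin.
- move=> x x0; have /andP[h1 h2] := @hb x x0 i.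
  by rewrite ger0_norm.
Qed.

Lemma energy_diff i a b : 0 <= a <= b ->
  energy E0 r i a - energy E0 r i b = \int[mu]_(x in `]a, b]) r i x.
Proof.
case/andP=> a0 ab; rewrite /energy opprB addrC addrA addrNK.
rewrite -(@Rintegral_itvB _ (r i) (BLeft 0) (BRight b) a) //.
exact: r_int.
Qed.

Lemma Rint_oc_bnd i a b : 0 <= a <= b ->
  0 <= \int[mu]_(x in `]a, b]) r i x <= P i * (b - a).
Proof.
case/andP=> a0 ab; apply/andP; split.
  apply: Rintegral_ge0 => x /=; rewrite in_itv /= => /andP[ax _].
  by case/andP: (@hb x (le_trans a0 (ltW ax)) i).
apply: le_trans.
  apply: (@le_Rintegral _ _ _ mu _ (r i) (fun _ => P i)) => //.
  - exact: r_int.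
  - apply: (@int_bnd _ _ `|P i|) => //.
    + exact: itv_sub0.
    + exact: mu_itv_fin.
  - move=> x /=; rewrite in_itv /= => /andP[ax _].
    by case/andP: (@hb x (le_trans a0 (ltW ax)) i).
rewrite Rintegral_cst //.
have := lebesgue_measure_itv `]a, b]; rewrite /= lte_fin => ->.
by case: ltgtP ab => // <- _; rewrite subrr mulr0.
Qed.

Lemma Rint_ae_le (D : set R) (f1 f2 : R -> R) (M1 M2 : R) :
  measurable D -> D `<=` (`[0%R, +oo[ : set R) -> (mu D < +oo)%E ->
  measurable_fun (`[0%R, +oo[ : set R) f1 ->
  measurable_fun (`[0%R, +oo[ : set R) f2 ->
  (forall x, 0 <= x -> 0 <= f1 x <= M1) ->
  (forall x, 0 <= x -> 0 <= f2 x <= M2) ->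
  {ae mu, forall x, D x -> f1 x <= f2 x} ->
  \int[mu]_(x in D) f1 x <= \int[mu]_(x in D) f2 x.
Proof.
move=> mD D0 muD mf1 mf2 b1 b2 ae12.
have i1 : mu.-integrable D (EFin \o f1).
  apply: (@int_bnd _ _ M1) => // x x0; case/andP: (b1 x x0) => h1 h2.
  by rewrite ger0_norm.
have i2 : mu.-integrable D (EFin \o f2).
  apply: (@int_bnd _ _ M2) => // x x0; case/andP: (b2 x x0) => h1 h2.
  by rewrite ger0_norm.
have pos x : D x -> 0 <= x by move=> /D0; rewrite /= in_itv /= andbT.
rewrite /Rintegral fine_le //; first exact: integrable_fin_num.
  exact: integrable_fin_num.
apply: ae_ge0_le_integral => //.
- by move=> x Dx; rewrite lee_fin; case/andP: (b1 x (pos x Dx)).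
- by case/integrableP: i1.
- by move=> x Dx; rewrite lee_fin; case/andP: (b2 x (pos x Dx)).
- by case/integrableP: i2.
Qed.
End H.

Section A.
Variables (R : realType) (S : finType).

Lemma alloc_order (P E rho : S -> R) D i j : (forall k, 0 < P k) ->
  (forall k, 0 <= rho k <= P k) -> ggddf_alloc P E D rho ->
  E i / P i < E j / P j -> rho i / P i <= rho j / P j.
Proof.
move=> hP hr; rewrite /ggddf_alloc /=.
have rj0 : 0 <= rho j / P j.
  by apply: divr_ge0; [case/andP: (hr j)|exact: ltW].
case=> [[_ h0]|[_ [delta [lam [[j0 _] [_ [_ [/andP[lam0 lam1] [hgt [heq [hlt [hemp _]]]]]]]]]]]].
  by rewrite !h0 !mul0r.
have [Ei|Ei] := boolP (0 < E i); last by rewrite hemp ?mul0r //; apply/negP.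
move=> dij.
have Ej : 0 < E j.
  have : 0 < E j / P j by apply: lt_trans dij; apply: divr_gt0.
  by rewrite pmulr_lgt0 // invr_gt0.
have [dl|dg|de] := ltgtP (E i / P i) delta.
- by rewrite hlt // mul0r.
- rewrite hgt // hgt ?(lt_trans dg dij) // !divff //; exact: lt0r_neq0.
- rewrite heq // hgt //; last by rewrite -de.
  by rewrite mulfK ?divff //; apply: lt0r_neq0.
Qed.

Lemma alloc_J (P E rho : S -> R) D i j : (forall k, 0 < P k) ->
  ggddf_alloc P E D rho -> 0 < rho i -> 0 < E j -> rho j != P j ->
  E j / P j <= E i / P i.
Proof.
move=> hP; rewrite /ggddf_alloc /=.
case=> [[_ h0]|[_ [delta [lam [[j0 _] [_ [_ [/andP[lam0 lam1] [hgt [heq [hlt [hemp _]]]]]]]]]]]].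
  by rewrite h0 ltxx.
move=> ri Ej rj.
have Ei : 0 < E i by case: (boolP (0 < E i)) => // /negP /hemp h; move: ri; rewrite h ltxx.
have di : delta <= E i / P i.
  by rewrite leNgt; apply/negP => /hlt h; move: ri; rewrite h // ltxx.
apply: le_trans di; rewrite leNgt; apply/negP => /hgt h.
by move: rj; rewrite h // eqxx.
Qed.

Lemma alloc_fail (P E rho : S -> R) D j : (forall k, 0 < P k) ->
  (forall k, 0 <= rho k <= P k) -> ggddf_alloc P E D rho ->
  \sum_k rho k < D -> 0 < E j -> rho j = P j.
Proof.
move=> hP hr; rewrite /ggddf_alloc /=.
set dbar := Num.min D _.
move=> H.
have [hsum hemp] : \sum_k rho k = dbar /\ forall k, ~ (0 < E k) -> rho k = 0.
  case: H => [[-> h0]|[_ [delta [lam [_ [_ [_ [_ [_ [_ [_ [hemp hs]]]]]]]]]]]].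
    by split => // ; rewrite big1.
  by [].
move=> sD Ej.
have dbE : dbar = \sum_(k | 0 < E k) P k.
  rewrite /dbar; case: (leP D (\sum_(k | 0 < E k) P k)) => // hD.
  by move: sD; rewrite hsum /dbar min_l // ltxx.
have : \sum_(k | 0 < E k) (P k - rho k) = 0.
  rewrite sumrB -dbE -hsum (bigID (fun k => 0 < E k)) /=.
  rewrite addrAC subrr add0r big1 // => k /negP Ek; exact: hemp.
move/psumr_eq0P => h; apply/eqP; rewrite eq_sym -subr_eq0; apply/eqP.
apply: h => // k _; rewrite subr_ge0; by case/andP: (hr k).
Qed.
End A.

Section G.
Variables (R : realType) (S : finType).
Local Notation mu := (@lebesgue_measure R).
Variables (Ebar P E0 : S -> R) (d : R -> R) (g : S -> R -> R).
Hypothesis hP : forall i, 0 < P i.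
Hypothesis hg : ggddf Ebar P E0 d g.

Let hm : forall i, measurable_fun (`[0%R, +oo[ : set R) (g i).
Proof. by case: hg => -[]. Qed.
Let hb : forall t, 0 <= t -> forall i, 0 <= g i t <= P i.
Proof. by case: hg => -[_ h] _ t t0; case: (h t t0) => _ []. Qed.
Let hae : {ae mu, forall t, 0 <= t ->
     ggddf_alloc P (fun i => energy E0 g i t) (d t) (fun i => g i t)}.
Proof. by case: hg. Qed.

Let dur i t := energy E0 g i t / P i.

Lemma dur_diff k x y : 0 <= x <= y ->
  dur k x - dur k y = \int[mu]_(t in `]x, y]) (g k t / P k).
Proof.
move=> xy; rewrite /dur -mulrBl (energy_diff E0 hm hb k xy).
rewrite RintegralZr //; case/andP: xy => x0 _; exact: (r_int hm hb k y false x0).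
Qed.

Lemma dur_lip k x y : 0 <= x <= y -> 0 <= dur k x - dur k y <= y - x.
Proof.
move=> xy; rewrite /dur -mulrBl (energy_diff E0 hm hb k xy).
have /andP[h1 h2] := Rint_oc_bnd hm hb k xy.
have Pk := hP k.
rewrite divr_ge0 ?(ltW Pk) //= ler_pdivrMr // mulrC //.
Qed.

Lemma dur_order i j u v : 0 <= u <= v -> dur j u <= dur i u -> dur j v <= dur i v.
Proof.
case/andP=> u0 uv hu.
pose A := [set x | u <= x <= v /\ dur j x - dur i x <= 0].
have Au : A u by split; [rewrite lexx uv | rewrite subr_le0].
have hs : has_sup A.
  by split; [exists u | exists v => x [/andP[_ ->]]].
set w := sup A.
have uw : u <= w by apply: sup_upper_bound.
have wv : w <= v by apply: ge_sup; [exists u | move=> x [/andP[_ ->]]].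
have w0 : 0 <= w by apply: le_trans uw.
have phw : dur j w - dur i w <= 0.
  apply/ler_addgt0Pr => e e0; rewrite add0r.
  have [x Ax wx] := sup_adherent e0 hs.
  have xw : x <= w by apply: sup_upper_bound.
  case: Ax => /andP[ux _] phx.
  have x0 : 0 <= x by apply: le_trans ux.
  have /andP[j1 _] := dur_lip j (introT andP (conj x0 xw)).
  have /andP[_ i2] := dur_lip i (introT andP (conj x0 xw)).
  have : dur j w - dur i w <= (dur j x - dur i x) + (w - x).
    move: j1 i2; lra.
  by move=> h; apply: le_trans h _; move: phx wx; rewrite -/w; lra.
suff : dur j v - dur i v <= dur j w - dur i w.
  by move=> h; rewrite -subr_le0; apply: le_trans h phw.
have e1 := dur_diff j (introT andP (conj w0 wv)).
have e2 := dur_diff i (introT andP (conj w0 wv)).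
suff : \int[mu]_(t in `]w, v]) (g i t / P i) <= \int[mu]_(t in `]w, v]) (g j t / P j).
  by lra.
apply: (@Rint_ae_le _ _ _ _ 1 1) => //.
- exact: itv_sub0.
- exact: mu_itv_fin.
- by apply: measurable_funM => //; exact: measurable_cst.
- by apply: measurable_funM => //; exact: measurable_cst.
- move=> x x0; case/andP: (hb x0 i) => h1 h2.
  by rewrite divr_ge0 ?(ltW (hP i)) //= ler_pdivrMr // mul1r.
- move=> x x0; case/andP: (hb x0 j) => h1 h2.
  by rewrite divr_ge0 ?(ltW (hP j)) //= ler_pdivrMr // mul1r.
apply: (@filterS _ _ (ae_filter_ringOfSetsType mu) _ _ _ hae) => x hx /=; rewrite in_itv /= => /andP[wx xv].
have x0 : 0 <= x by apply: le_trans w0 (ltW wx).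
apply: (alloc_order (fun i => hP i) _ (hx x0)).
  by move=> k; exact: hb.
rewrite -/(dur i x) -/(dur j x) -subr_gt0 ltNge; apply/negP => hle.
have : A x by split => //; rewrite (le_trans uw (ltW wx)) xv; rewrite -opprB oppr_le0 in hle *; lra.
by move/sup_upper_bound => /(_ hs); rewrite leNgt wx.
Qed.

Let hsumg : forall t, 0 <= t -> \sum_i g i t <= d t.
Proof. by case: hg => -[_ h] _ t t0; case: (h t t0) => _ []. Qed.
Let heng : forall t, 0 <= t -> forall i, 0 <= energy E0 g i t.
Proof. by case: hg => -[_ h] _ t t0 i; case: (h t t0) => /(_ i) /andP[]. Qed.

Lemma energy_mono i x y : 0 <= x <= y -> energy E0 g i y <= energy E0 g i x.
Proof.
move=> xy; rewrite -subr_ge0 (energy_diff E0 hm hb i xy).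
by case/andP: (Rint_oc_bnd hm hb i xy).
Qed.

Lemma pw (r : S -> R -> R) T x :
  (forall t, 0 <= t -> forall i, 0 <= r i t <= P i) -> 0 <= x <= T ->
  ggddf_alloc P (fun i => energy E0 g i x) (d x) (fun i => g i x) ->
  Num.max (d x - \sum_i g i x) 0 + \sum_(i | ~~ (0 < energy E0 g i T)) g i x
  <= Num.max (d x - \sum_(i | 0 < energy E0 g i T) r i x) 0.
Proof.
move=> hbr /andP[x0 xT] ha.
set K := fun j => 0 < energy E0 g j T.
have KE j : K j -> 0 < energy E0 g j x.
  move=> Kj; apply: lt_le_trans Kj _; apply: energy_mono.
  by rewrite x0 xT.
have hgb k : 0 <= g k x <= P k by exact: hb.
have [full|nfull] := boolP [forall j, K j ==> (g j x == P j)].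
  have e1 : \sum_i g i x = \sum_(i | K i) P i + \sum_(i | ~~ K i) g i x.
    rewrite (bigID K) /=; congr (_ + _); apply: eq_bigr => j Kj.
    by move/forallP: full => /(_ j); rewrite Kj /= => /eqP.
  have sg := hsumg x0.
  rewrite (@max_l _ _ (d x - _)) ?subr_ge0 // e1.
  have : \sum_(i | K i) r i x <= \sum_(i | K i) P i.
    by apply: ler_sum => i _; case/andP: (hbr x x0 i).
  move=> h; rewrite le_max; apply/orP; left; lra.
have [j /andP[Kj nj]] : exists j, K j && (g j x != P j).
  move/forallPn: nfull => [j]; rewrite negb_imply => h; by exists j.
have dle : d x - \sum_i g i x <= 0.
  rewrite subr_le0 leNgt; apply/negP => lt.
  by move: nj; rewrite (alloc_fail (fun k => hP k) hgb ha lt (KE j Kj)) eqxx.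
have J0 : \sum_(i | ~~ K i) g i x = 0.
  apply: big1 => i nKi; apply/eqP; rewrite eq_le; case/andP: (hgb i) => -> _.
  rewrite andbT leNgt; apply/negP => gi.
  have o1 := alloc_J (fun k => hP k) ha gi (KE j Kj) nj.
  have o2 := dur_order (introT andP (conj x0 xT)) o1.
  have : energy E0 g i T / P i <= 0.
    by rewrite pmulr_lle0 ?invr_gt0 // leNgt.
  have : 0 < energy E0 g j T / P j by rewrite divr_gt0.
  move: o2; rewrite /dur; lra.
by rewrite (@max_r _ _ (d x - _)) // J0 addr0 le_max lexx orbT.
Qed.
End G.

Section M.
Variables (R : realType) (S : finType).
Local Notation mu := (@lebesgue_measure R).

Lemma msum_filter (D : set R) (Pr : pred S) (h : S -> R -> R) :
  (forall i, measurable_fun D (h i)) ->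
  measurable_fun D (fun x => \sum_(i | Pr i) h i x).
Proof.
move=> mh.
rewrite (_ : (fun x => _) = (fun x => \sum_(i <- index_enum S)
    (if Pr i then h i else cst 0) x)); last first.
  by apply/funext => x; rewrite big_mkcond; apply: eq_bigr => i _; case: (Pr i).
apply: measurable_sum => i; case: (Pr i) => //; exact: measurable_cst.
Qed.

Lemma int_sum_filter (D : set R) (Pr : pred S) (f : S -> R -> \bar R) :
  measurable D -> (forall i, measurable_fun D (f i)) ->
  (forall i x, D x -> (0 <= f i x)%E) ->
  (\int[mu]_(x in D) (\sum_(i | Pr i) f i x) =
   \sum_(i | Pr i) \int[mu]_(x in D) f i x)%E.
Proof.
move=> mD mf f0.
rewrite big_mkcond /=.
under eq_integral do rewrite big_mkcond /=.
rewrite (@ge0_integral_sum _ _ _ mu D mD _ (fun i x => if Pr i then f i x else 0%E)).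
- by apply: eq_bigr => i _; case: (Pr i) => //; rewrite integral0.
- by move=> i; case: (Pr i); [exact: mf| exact: measurable_cst].
- by move=> i x Dx; case: (Pr i) => //; exact: f0.
Qed.

Variables (Ebar P E0 : S -> R) (d : R -> R) (g : S -> R -> R).
Hypothesis hP : forall i, 0 < P i.
Hypothesis hg : ggddf Ebar P E0 d g.
Variables (r : S -> R -> R) (T : R).
Hypothesis hr : policy Ebar P E0 d r.
Hypothesis T0 : 0 <= T.
Hypothesis hdint : mu.-integrable `[0%R, T] (fun t => (d t)%:E).

Lemma pol_facts (q : S -> R -> R) : policy Ebar P E0 d q ->
  [/\ forall i, measurable_fun (`[0%R, +oo[ : set R) (q i),
      forall t, 0 <= t -> forall i, 0 <= q i t <= P i,
      forall t, 0 <= t -> \sum_i q i t <= d t &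
      forall t, 0 <= t -> forall i, 0 <= energy E0 q i t].
Proof.
case=> hm h; split => //.
- by move=> t t0; case: (h t t0) => _ [].
- by move=> t t0; case: (h t t0) => _ [].
- by move=> t t0 i; case: (h t t0) => /(_ i) /andP[].
Qed.

Let D := (`[0%R, T] : set R).
Let mD : measurable D. Proof. exact: measurable_itv. Qed.
Let D0 : D `<=` (`[0%R, +oo[ : set R). Proof. exact: itv_sub0. Qed.
Let Dp x : D x -> 0 <= x.
Proof. by move=> /D0; rewrite /= in_itv /= andbT. Qed.
Let md : measurable_fun D d.
Proof. by apply/measurable_EFinP; case/integrableP: hdint. Qed.

Lemma int_energy (q : S -> R -> R) i : policy Ebar P E0 d q ->
  (\int[mu]_(x in D) (q i x)%:E = (E0 i - energy E0 q i T)%:E)%E.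
Proof.
case/pol_facts => hm hb _ _.
rewrite /energy opprB addrC subrK /Rintegral fineK //.
exact: (integrable_fin_num _ (r_int hm hb i T true (lexx 0))).
Qed.

Lemma main_step : unserved d r T = 0%E -> unserved d g T = 0%E.
Proof.
move=> hu.
have [hmg hbg hsg heg] := pol_facts hg.1.
have [hmr hbr hsr her] := pol_facts hr.
have mgD i : measurable_fun D (g i) by apply: measurable_funS (hmg i).
have mrD i : measurable_fun D (r i) by apply: measurable_funS (hmr i).
set K := fun j => 0 < energy E0 g j T.
pose Fg x := Num.max (d x - \sum_i g i x) 0.
pose Fr x := Num.max (d x - \sum_i r i x) 0.
have mFg : measurable_fun D Fg.
  apply: measurable_maxr; last exact: measurable_cst.
  by apply: measurable_funB => //; apply: msum_filter.
have mFr : measurable_fun D Fr.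
  apply: measurable_maxr; last exact: measurable_cst.
  by apply: measurable_funB => //; apply: msum_filter.
have sJg x : D x -> 0 <= \sum_(i | ~~ K i) g i x.
  by move=> Dx; apply: sumr_ge0 => i _; case/andP: (hbg x (Dp Dx) i).
have sJr x : D x -> 0 <= \sum_(i | ~~ K i) r i x.
  by move=> Dx; apply: sumr_ge0 => i _; case/andP: (hbr x (Dp Dx) i).
have stepA : (\int[mu]_(x in D) (Fg x + \sum_(i | ~~ K i) g i x)%:E <=
    \int[mu]_(x in D) (Num.max (d x - \sum_(i | K i) r i x) 0)%:E)%E.
  apply: ae_ge0_le_integral => //.
  - by move=> x Dx; rewrite lee_fin addr_ge0 ?le_max ?lexx ?orbT // sJg.
  - apply/measurable_EFinP; apply: measurable_funD => //; exact: msum_filter.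
  - by move=> x Dx; rewrite lee_fin le_max lexx orbT.
  - apply/measurable_EFinP; apply: measurable_maxr; last exact: measurable_cst.
    by apply: measurable_funB => //; apply: msum_filter.
  case: hg => _ hae.
  apply: (@filterS _ _ (ae_filter_ringOfSetsType mu) _ _ _ hae) => x hx Dx.
  have xT : 0 <= x <= T by move: Dx; rewrite /D /= in_itv /=.
  rewrite lee_fin; exact: (pw hP hg _ xT (hx (Dp Dx))).
have stepB : (\int[mu]_(x in D) (Num.max (d x - \sum_(i | K i) r i x) 0)%:E <=
    \int[mu]_(x in D) (Fr x + \sum_(i | ~~ K i) r i x)%:E)%E.
  apply: ge0_le_integral => //.
  - by move=> x Dx; rewrite lee_fin le_max lexx orbT.
  - apply/measurable_EFinP; apply: measurable_maxr; last exact: measurable_cst.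
    by apply: measurable_funB => //; apply: msum_filter.
  - apply/measurable_EFinP; apply: measurable_funD => //; exact: msum_filter.
  move=> x Dx; rewrite lee_fin /Fr.
  have e1 : \sum_i r i x = \sum_(i | K i) r i x + \sum_(i | ~~ K i) r i x.
    by rewrite (bigID K).
  have h1 := hsr x (Dp Dx); have h2 := sJr x Dx.
  rewrite (@max_l _ _ (d x - \sum_i r i x)) ?subr_ge0 //.
  rewrite ge_max; apply/andP; split; lra.
have splitI (F : R -> R) (q : S -> R -> R) : measurable_fun D F ->
    (forall x, D x -> 0 <= F x) -> (forall i, measurable_fun D (q i)) ->
    (forall i x, D x -> 0 <= q i x) ->
    (\int[mu]_(x in D) (F x + \sum_(i | ~~ K i) q i x)%:E =
     \int[mu]_(x in D) (F x)%:E + \sum_(i | ~~ K i) \int[mu]_(x in D) (q i x)%:E)%E.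
  move=> mF F0 mq q0.
  have mF' : measurable_fun D (fun x => (F x)%:E) by apply/measurable_EFinP.
  have mq' i : measurable_fun D (fun x => (q i x)%:E) by apply/measurable_EFinP.
  have q0' i x : D x -> (0 <= (q i x)%:E)%E by move=> Dx; rewrite lee_fin q0.
  have F0' x : D x -> (0 <= (F x)%:E)%E by move=> Dx; rewrite lee_fin F0.
  under eq_integral do rewrite EFinD -sumEFin.
  rewrite (@ge0_integralD _ _ _ mu D mD (fun x => (F x)%:E)) //.
  - by rewrite int_sum_filter.
  - by move=> x Dx; apply: sume_ge0 => i _; exact: q0'.
  - rewrite (_ : (fun x => _) = (fun x => (\sum_(i | ~~ K i) q i x)%:E)).
      by apply/measurable_EFinP; apply: msum_filter.
    by apply/funext => x; rewrite sumEFin.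
have := le_trans stepA stepB.
have Fg0 x : D x -> 0 <= Fg x by move=> Dx; rewrite le_max lexx orbT.
have Fr0 x : D x -> 0 <= Fr x by move=> Dx; rewrite le_max lexx orbT.
have g0 i x : D x -> 0 <= g i x by move=> Dx; case/andP: (hbg x (Dp Dx) i).
have r0 i x : D x -> 0 <= r i x by move=> Dx; case/andP: (hbr x (Dp Dx) i).
rewrite (splitI Fg g mFg Fg0 mgD g0) (splitI Fr r mFr Fr0 mrD r0).
have -> : (\int[mu]_(x in D) (Fr x)%:E)%E = unserved d r T by [].
rewrite hu add0e.
have -> : (\int[mu]_(x in D) (Fg x)%:E)%E = unserved d g T by [].
under eq_bigr => i _ do rewrite (int_energy i hg.1).
under [X in (_ <= X)%E]eq_bigr => i _ do rewrite (int_energy i hr).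
rewrite !sumEFin.
have cle : \sum_(i | ~~ K i) (E0 i - energy E0 r i T) <=
           \sum_(i | ~~ K i) (E0 i - energy E0 g i T).
  apply: ler_sum => i nK.
  have : energy E0 g i T <= 0 by rewrite leNgt.
  have := her T T0 i; lra.
have u0 : (0 <= unserved d g T)%E.
  by apply: integral_ge0 => x Dx; rewrite lee_fin le_max lexx orbT.
move: u0; case: (unserved d g T) => [u| |] //.
- rewrite lee_fin -EFinD lee_fin => u0 h; congr EFin; apply/eqP.
  rewrite eq_le u0 andbT; lra.
Qed.
End M.

Unset Implicit Arguments. Set Strict Implicit.

Theorem mainTheorem5 (R : realType) (S : finType)
  (Ebar P E0 : S -> R) (d : R -> R)
  (hEbar : forall i, 0 < Ebar i) (hP : forall i, 0 < P i)
  (hE0 : forall i, 0 <= E0 i <= Ebar i)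
  (hd : forall t, 0 <= t -> 0 <= d t)
  (hdint : forall T, 0 <= T ->
     (@lebesgue_measure R).-integrable `[0, T] (fun t => (d t)%:E))
  (g : S -> R -> R) (hg : ggddf Ebar P E0 d g) :
  forall r : S -> R -> R, policy Ebar P E0 d r -> (tau d r <= tau d g)%E.
Proof.
move=> r hr; rewrite /tau; apply: ereal_sup_le; apply: image_subset.
move=> T [T0 hu]; split => //.
exact: (main_step hP hg hr T0 (hdint T T0) hu).
Qed.
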